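(* Let $\theta\in(\pi,2\pi)$. Then for all $x,y\in S_\theta$, $s_{S_\theta}(x,y)\le\sqrt2\sin(\theta/4)\,p_{S_\theta}(x,y)$, and the constant $\sqrt2\sin(\theta/4)$ is sharp.
   Context: $S_\theta=\{x\in\mathbb{C}:0<\arg(x)<\theta\}$. For a domain $G\subsetneq\mathbb{C}$, $d_G(x)=\inf\{|x-z|:z\in\partial G\}$, $s_G(x,y)=\frac{|x-y|}{\inf_{z\in\partial G}(|x-z|+|z-y|)}$, $p_G(x,y)=\frac{|x-y|}{\sqrt{|x-y|^2+4d_G(x)d_G(y)}}$. *)

(* Defs.v *)
From Stdlib Require Import Reals.
From Coquelicot Require Import Coquelicot.
Open Scope R_scope.

(* Sector S_theta = { x in C : 0 < arg x < theta }, arg taken in [0, 2*pi)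
   (the only reading giving a domain when theta > pi).  Written in polar form:
   x = r e^{i t} with r > 0 and 0 < t < theta. *)
Definition sector (theta : R) (x : C) : Prop :=
  exists r t : R, 0 < r /\ 0 < t /\ t < theta /\ x = (r * cos t, r * sin t).

Definition boundary (G : C -> Prop) (z : C) : Prop :=
  forall e : R, 0 < e ->
    (exists w, G w /\ Cmod (Cminus w z) < e) /\
    (exists w, ~ G w /\ Cmod (Cminus w z) < e).

Definition dist_bd (G : C -> Prop) (x : C) : R :=
  real (Glb_Rbar (fun d => exists z, boundary G z /\ d = Cmod (Cminus x z))).

Definition s_metric (G : C -> Prop) (x y : C) : R :=
  Cmod (Cminus x y) /
  real (Glb_Rbar (fun d => exists z, boundary G z /\
                     d = Cmod (Cminus x z) + Cmod (Cminus z y))).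

Definition p_metric (G : C -> Prop) (x y : C) : R :=
  Cmod (Cminus x y) /
  sqrt (Cmod (Cminus x y) ^ 2 + 4 * dist_bd G x * dist_bd G y).

(* Main.v *)
Require Import Defs.
From Stdlib Require Import Reals Lra Psatz Classical.
From Coquelicot Require Import Coquelicot.
Open Scope R_scope.

Lemma Cmod_mp (a b c d : R) :
  Cmod (Cminus (a, b) (c, d)) = sqrt ((a - c) ^ 2 + (b - d) ^ 2).
Proof. unfold Cmod, Cminus, Cplus, Copp; simpl. f_equal; ring. Qed.

Definition Lf th (z : C) := snd z * cos th - fst z * sin th.
Definition inW th (z : C) := snd z <= 0 /\ 0 <= Lf th z.

Lemma sin_neg_range t : - PI < t < 0 -> sin t < 0.
Proof. intros H. replace t with (- (- t)) by ring. rewrite sin_neg.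
  assert (0 < sin (-t)) by (apply sin_gt_0; lra). lra. Qed.

Lemma sector_notW th (Hth : PI < th < 2 * PI) x : sector th x -> ~ inW th x.
Proof.
  intros [r [t [Hr [Ht0 [Htt ->]]]]] [Hb HL]. unfold Lf in HL; simpl in *.
  destruct (Rlt_le_dec t PI) as [Hlt|Hge].
  - assert (0 < sin t) by (apply sin_gt_0; lra). nra.
  - assert (sin (t - th) < 0) by (apply sin_neg_range; lra).
    rewrite sin_minus in H. nra.
Qed.

Lemma sin_th_neg th (Hth : PI < th < 2 * PI) : sin th < 0.
Proof.
  assert (H : sin (th - 2 * PI) < 0) by (apply sin_neg_range; lra).
  rewrite sin_minus, sin_2PI, cos_2PI in H. lra.
Qed.

Lemma notW_sector th (Hth : PI < th < 2 * PI) x : ~ inW th x -> sector th x.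
Proof.
  destruct x as [a b]. intros HW. unfold inW, Lf in HW; simpl in HW.
  assert (Hs : sin th < 0) by (apply sin_th_neg; lra).
  assert (Hr2 : 0 < a ^ 2 + b ^ 2).
  { destruct (Req_dec a 0); destruct (Req_dec b 0); subst.
    - exfalso; apply HW; split; lra.
    - assert (0 < b^2) by (apply pow2_gt_0; auto). nra.
    - assert (0 < a^2) by (apply pow2_gt_0; auto). nra.
    - assert (0 < b^2) by (apply pow2_gt_0; auto). nra. }
  set (r := sqrt (a ^ 2 + b ^ 2)).
  assert (Hr : 0 < r) by (apply sqrt_lt_R0; auto).
  assert (Hrr : r * r = a ^ 2 + b ^ 2) by (apply sqrt_sqrt; lra).
  assert (Hab : - 1 <= a / r <= 1).
  { assert (Hq : (a / r) ^ 2 <= 1).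
    { replace ((a / r) ^ 2) with (a ^ 2 / (r * r)) by (field; lra).
      rewrite Hrr. apply Rmult_le_reg_r with (a ^ 2 + b ^ 2); auto.
      unfold Rdiv. rewrite Rmult_assoc, Rinv_l by lra. nra. }
    nra. }
  assert (Hca : cos (acos (a / r)) = a / r) by (apply cos_acos; auto).
  assert (Hsa : sin (acos (a / r)) = Rabs b / r).
  { rewrite sin_acos by auto. 
    replace (1 - (a / r)²) with ((Rabs b / r) ^ 2).
    - apply sqrt_pow2. apply Rdiv_le_0_compat; [apply Rabs_pos | lra].
    - unfold Rsqr.
      replace ((Rabs b / r) ^ 2) with ((Rabs b)^2 / (r*r)) by (field; lra).
      rewrite pow2_abs. field_simplify_eq; [|lra]. nra. }
  assert (HB := acos_bound (a / r)).
  exists r.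
  destruct (Rlt_le_dec 0 b) as [Hb|Hb].
  - exists (acos (a / r)).
    assert (acos (a / r) <> 0).
    { intros E. rewrite E, sin_0 in Hsa. rewrite Rabs_pos_eq in Hsa by lra.
      assert (b = 0) by (apply (Rmult_eq_reg_r (/ r)); [lra| apply Rinv_neq_0_compat; lra] ). lra. }
    repeat split; try lra.
    + f_equal; [rewrite Hca | rewrite Hsa, Rabs_pos_eq by lra]; field; lra.
  - exists (2 * PI - acos (a / r)).
    assert (Hc2 : cos (2 * PI - acos (a / r)) = a / r).
    { rewrite cos_minus, cos_2PI, sin_2PI, Hca. ring. }
    assert (Hs2 : sin (2 * PI - acos (a / r)) = b / r).
    { rewrite sin_minus, cos_2PI, sin_2PI, Hsa. rewrite Rabs_left1 by lra. field; lra. }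
    assert (HL : b * cos th - a * sin th < 0).
    { destruct (Rlt_le_dec (b * cos th - a * sin th) 0); auto.
      exfalso; apply HW; split; lra. }
    assert (Hlt : 2 * PI - acos (a / r) < th).
    { destruct (Rlt_le_dec (2 * PI - acos (a / r)) th) as [h|h]; auto.
      exfalso. assert (Ht : 0 <= 2 * PI - acos (a / r) - th <= PI) by lra. set (t := 2 * PI - acos (a / r)) in *.
      assert (0 <= sin (t - th)).
      { apply sin_ge_0; lra. }
      rewrite sin_minus, Hs2, Hc2 in H.
      assert (0 <= (b / r * cos th - a / r * sin th) * r) by nra.
      replace ((b / r * cos th - a / r * sin th) * r) with (b * cos th - a * sin th) in H0 by (field; lra).
      lra. }
    repeat split; try lra.
    f_equal; [rewrite Hc2 | rewrite Hs2]; field; lra.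
Qed.

Lemma abs_le_sqrt p q : p ^ 2 <= q -> Rabs p <= sqrt q.
Proof. intros H. rewrite <- sqrt_Rsqr_abs. apply sqrt_le_1_alt. unfold Rsqr; nra. Qed.

Lemma Cmod_scale (t a b : R) : 0 <= t -> sqrt ((t * a) ^ 2 + (t * b) ^ 2) = t * sqrt (a ^ 2 + b ^ 2).
Proof. intros Ht. replace ((t * a) ^ 2 + (t * b) ^ 2) with (t ^ 2 * (a ^ 2 + b ^ 2)) by ring.
  rewrite sqrt_mult_alt by nra. rewrite sqrt_pow2 by lra. reflexivity. Qed.

Lemma snd_lip (w z : C) : Rabs (snd w - snd z) <= Cmod (Cminus w z).
Proof. destruct w as [a b], z as [c d]. rewrite Cmod_mp. apply abs_le_sqrt. simpl. assert (0 <= (a-c)^2) by apply pow2_ge_0. lra. Qed.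

Lemma fst_lip (w z : C) : Rabs (fst w - fst z) <= Cmod (Cminus w z).
Proof. destruct w as [a b], z as [c d]. rewrite Cmod_mp. apply abs_le_sqrt. simpl. assert (0 <= (b-d)^2) by apply pow2_ge_0. lra. Qed.

Lemma Lf_lip th (w z : C) : Rabs (Lf th w - Lf th z) <= Cmod (Cminus w z).
Proof. destruct w as [a b], z as [c d]. rewrite Cmod_mp. apply abs_le_sqrt. unfold Lf; simpl.
  pose proof (sin2_cos2 th) as E. unfold Rsqr in E.
  assert (0 <= ((a - c) * cos th + (b - d) * sin th) ^ 2) by apply pow2_ge_0.
  assert (Eq : (b * cos th - a * sin th - (d * cos th - c * sin th)) *
  ((b * cos th - a * sin th - (d * cos th - c * sin th)) * 1) + ((a - c) * cos th + (b - d) * sin th) ^ 2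
  = ((a - c) * ((a - c) * 1) + (b - d) * ((b - d) * 1)) * (sin th * sin th + cos th * cos th)) by ring.
  rewrite E in Eq. lra. Qed.

Lemma boundary_W th (Hth : PI < th < 2 * PI) z : boundary (sector th) z -> inW th z.
Proof.
  intros Hb. split.
  - destruct (Rle_dec (snd z) 0) as [h|h]; auto. exfalso.
    destruct (Hb (snd z) ltac:(lra)) as [_ [w [Hw Hd]]].
    assert (HW : inW th w) by (apply NNPP; intro; apply Hw, notW_sector; auto).
    pose proof (snd_lip w z). destruct HW. 
    rewrite Rabs_minus_sym in H. pose proof (Rle_abs (snd z - snd w)). lra.
  - destruct (Rle_dec 0 (Lf th z)) as [h|h]; auto. exfalso.
    destruct (Hb (- Lf th z) ltac:(lra)) as [_ [w [Hw Hd]]].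
    assert (HW : inW th w) by (apply NNPP; intro; apply Hw, notW_sector; auto).
    pose proof (Lf_lip th w z). destruct HW. 
    pose proof (Rle_abs (Lf th w - Lf th z)). lra.
Qed.

Lemma affine_first g0 g1 : 0 <= g1 -> exists tau, 0 <= tau <= 1 /\
  (forall t, tau <= t <= 1 -> 0 <= g0 + t * (g1 - g0)) /\
  (forall t, 0 <= t < tau -> g0 + t * (g1 - g0) < 0) /\ (tau = 0 -> 0 <= g0).
Proof.
  intros H1. destruct (Rle_dec 0 g0) as [h|h].
  - exists 0. repeat split; try lra; intros t Ht; nra.
  - exists (g0 / (g0 - g1)).
    assert (E : g0 / (g0 - g1) * (g1 - g0) = - g0) by (field; lra).
    assert (Hpos : 0 < g0 / (g0 - g1)).
    { apply Rdiv_neg_neg; lra. }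
    repeat split; try lra.
    + nra.
    + intros t Ht. nra.
    + intros t Ht. nra.
Qed.

Lemma Cmod_self (w : C) : Cmod (Cminus w w) = 0.
Proof. destruct w as [a b]. rewrite Cmod_mp. replace ((a - a) ^ 2 + (b - b) ^ 2) with 0 by ring.
  apply sqrt_0. Qed.

Lemma Cmod_ge0 (w : C) : 0 <= Cmod w.
Proof. apply Cmod_ge_0. Qed.

Lemma seg_boundary th (Hth : PI < th < 2 * PI) x q :
  sector th x -> inW th q ->
  exists w, boundary (sector th) w /\ Cmod (Cminus x w) <= Cmod (Cminus x q).
Proof.
  intros Hx Hq. pose proof (sector_notW th Hth x Hx) as HxW.
  destruct x as [a b], q as [c d]. destruct Hq as [Hq1 Hq2]. simpl in Hq1.
  set (P := fun t => (a + t * (c - a), b + t * (d - b)) : C).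
  set (L0 := Lf th (a, b)). set (L1 := Lf th (c, d)).
  assert (HLP : forall t, Lf th (P t) = L0 + t * (L1 - L0)).
  { intros t. unfold P, L0, L1, Lf; simpl. ring. }
  destruct (affine_first (- b) (- d) ltac:(lra)) as [t1 [Ht1 [Ht1a [Ht1b Ht1c]]]].
  destruct (affine_first L0 L1 Hq2) as [t2 [Ht2 [Ht2a [Ht2b Ht2c]]]].
  set (t0 := Rmax t1 t2).
  assert (Ht0 : 0 <= t0 <= 1) by (unfold t0; apply Rmax_case; lra).
  assert (HinW : forall t, t0 <= t <= 1 -> inW th (P t)).
  { intros t Ht. pose proof (Rmax_l t1 t2). pose proof (Rmax_r t1 t2). fold t0 in H, H0.
    split.
    - unfold P; simpl. specialize (Ht1a t ltac:(lra)). lra.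
    - rewrite HLP. apply Ht2a. lra. }
  assert (HnW : forall t, 0 <= t < t0 -> ~ inW th (P t)).
  { intros t Ht [Hw1 Hw2]. unfold t0 in Ht. revert Ht. apply Rmax_case; intros Ht.
    - specialize (Ht1b t Ht). unfold P in Hw1; simpl in Hw1. lra.
    - specialize (Ht2b t Ht). rewrite HLP in Hw2. lra. }
  assert (Ht0pos : 0 < t0).
  { destruct (Rlt_le_dec 0 t0) as [h|h]; auto. exfalso.
    assert (t1 = 0) by (pose proof (Rmax_l t1 t2); fold t0 in H; lra).
    assert (t2 = 0) by (pose proof (Rmax_r t1 t2); fold t0 in H0; lra).
    apply HxW. split; simpl; [specialize (Ht1c H); lra | apply Ht2c; auto]. }
  set (N := sqrt ((a - c) ^ 2 + (b - d) ^ 2)).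
  assert (HN : 0 <= N) by apply sqrt_pos.
  assert (Hdist : forall s t, s <= t -> Cmod (Cminus (P s) (P t)) = (t - s) * N).
  { intros s t Hst. unfold P. rewrite Cmod_mp.
    replace (a + s * (c - a) - (a + t * (c - a))) with ((t - s) * (a - c)) by ring.
    replace (b + s * (d - b) - (b + t * (d - b))) with ((t - s) * (b - d)) by ring.
    apply Cmod_scale; lra. }
  exists (P t0). split.
  - intros e He. split.
    + set (dl := Rmin t0 (e / (2 * (N + 1)))).
      assert (Hdl1 : 0 < dl) by (unfold dl; apply Rmin_case; [lra | apply Rdiv_lt_0_compat; lra]).
      assert (Hdl2 : dl <= t0) by apply Rmin_l.
      assert (Hdl3 : dl * (2 * (N + 1)) <= e).
      { assert (dl <= e / (2 * (N + 1))) by apply Rmin_r.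
        apply Rmult_le_compat_r with (r := 2 * (N + 1)) in H; [|lra].
        replace (e / (2 * (N + 1)) * (2 * (N + 1))) with e in H by (field; lra). lra. }
      exists (P (t0 - dl)). split.
      * apply notW_sector; auto. apply HnW. lra.
      * rewrite Hdist by lra. nra.
    + exists (P t0). split.
      * intro Hs. apply (sector_notW th Hth _ Hs). apply HinW. lra.
      * rewrite Cmod_self. lra.
  - unfold P. rewrite !Cmod_mp.
    replace (a - (a + t0 * (c - a))) with (t0 * (a - c)) by ring.
    replace (b - (b + t0 * (d - b))) with (t0 * (b - d)) by ring.
    rewrite Cmod_scale by lra. fold N. nra.
Qed.

Lemma glb_props (E : R -> Prop) v0 l : E v0 -> (forall v, E v -> l <= v) ->
  (forall v, E v -> real (Glb_Rbar E) <= v) /\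
  (forall m, (forall v, E v -> m <= v) -> m <= real (Glb_Rbar E)).
Proof.
  intros H0 Hl. destruct (Glb_Rbar_correct E) as [Hlb Hg].
  destruct (Glb_Rbar E) as [g| |] eqn:Eg.
  - simpl. split.
    + intros v Hv. exact (Hlb v Hv).
    + intros m Hm. exact (Hg (Finite m) Hm).
  - exfalso. exact (Hlb v0 H0).
  - exfalso. exact (Hg (Finite l) Hl).
Qed.

Definition fval th a := if Rle_dec a (PI/2) then sin a
  else if Rle_dec (th - a) (PI/2) then sin (th - a) else 1.
Definition qpt th u a : C := if Rle_dec a (PI/2) then (u * cos a, 0)
  else if Rle_dec (th - a) (PI/2) then (u * cos (th - a) * cos th, u * cos (th - a) * sin th)
  else (0, 0).

Lemma qpt_spec th (Hth : PI < th < 2 * PI) u a : 0 < a < th -> 0 < u ->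
  inW th (qpt th u a) /\ Cmod (Cminus (u * cos a, u * sin a) (qpt th u a)) = u * fval th a
  /\ 0 <= fval th a.
Proof.
  intros Ha Hu. pose proof (sin_th_neg th Hth) as Hs. pose proof PI_RGT_0.
  unfold qpt, fval. destruct (Rle_dec a (PI/2)) as [h1|h1].
  - assert (0 <= cos a) by (apply cos_ge_0; lra).
    assert (0 <= sin a) by (apply sin_ge_0; lra).
    split; [|split]; auto.
    + assert (0 <= u * cos a) by (apply Rmult_le_pos; lra).
      split; unfold Lf; simpl; [lra|]. nra.
    + rewrite Cmod_mp. replace ((u * cos a - u * cos a) ^ 2 + (u * sin a - 0) ^ 2) with ((u * sin a)^2) by ring.
      apply sqrt_pow2. nra.
  - destruct (Rle_dec (th - a) (PI/2)) as [h2|h2].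
    + assert (Hb0 : 0 < th - a <= PI / 2) by lra. set (b := th - a) in *.
      assert (0 <= cos b) by (apply cos_ge_0; lra).
      assert (0 <= sin b) by (apply sin_ge_0; lra).
      split; [|split]; auto.
      * assert (0 <= u * cos b) by (apply Rmult_le_pos; lra).
        split; unfold Lf; simpl.
        -- assert (0 <= (u * cos b) * (- sin th)) by (apply Rmult_le_pos; lra). lra.
        -- right. ring.
      * replace a with (th - b) by (unfold b; ring). rewrite cos_minus, sin_minus, Cmod_mp.
        pose proof (sin2_cos2 th) as E. unfold Rsqr in E.
        replace ((u * (cos th * cos b + sin th * sin b) - u * cos b * cos th) ^ 2 +
                 (u * (sin th * cos b - cos th * sin b) - u * cos b * sin th) ^ 2)
          with ((u * sin b) ^ 2 * (sin th * sin th + cos th * cos th)) by ring.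
        rewrite E, Rmult_1_r. apply sqrt_pow2. nra.
    + split; [|split]; try lra.
      * split; unfold Lf; simpl; lra.
      * rewrite Cmod_mp. pose proof (sin2_cos2 a) as E. unfold Rsqr in E.
        replace ((u * cos a - 0) ^ 2 + (u * sin a - 0) ^ 2) with (u ^ 2 * (sin a * sin a + cos a * cos a)) by ring.
        rewrite E, Rmult_1_r, sqrt_pow2; lra.
Qed.

Lemma fval_bounds th (Hth : PI < th < 2 * PI) a : 0 < a < th ->
  0 <= fval th a /\ fval th a <= sin (Rmin a (PI / 2)) /\ fval th a <= sin (Rmin (th - a) (PI / 2)).
Proof.
  intros Ha. pose proof PI_RGT_0. unfold fval.
  destruct (Rle_dec a (PI/2)) as [h1|h1].
  - rewrite Rmin_left by lra. rewrite Rmin_right by lra. rewrite sin_PI2.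
    pose proof (SIN_bound a). assert (0 <= sin a) by (apply sin_ge_0; lra). lra.
  - rewrite Rmin_right by lra.
    destruct (Rle_dec (th - a) (PI/2)) as [h2|h2].
    + rewrite Rmin_left by lra. rewrite sin_PI2.
      pose proof (SIN_bound (th - a)). assert (0 <= sin (th - a)) by (apply sin_ge_0; lra). lra.
    + rewrite Rmin_right by lra. rewrite sin_PI2. lra.
Qed.

Lemma cth2_bounds th (Hth : PI < th < 2 * PI) : -1 <= cos (th / 2) < 0.
Proof. pose proof (COS_bound (th/2)). split; [lra|]. apply cos_lt_0; lra. Qed.

Lemma trig_core th (Hth : PI < th < 2 * PI) a b : 0 < a <= b -> b < th ->
  sin (Rmin a (PI / 2)) * sin (Rmin (th - b) (PI / 2)) <= (1 + cos (a - b)) / 2 - cos (th / 2).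
Proof.
  intros Hab Hb. pose proof PI_RGT_0.
  set (p := Rmin a (PI / 2)). set (q := Rmin (th - b) (PI / 2)).
  assert (Hp : 0 < p <= a /\ p <= PI / 2) by (unfold p; split; [split; [apply Rmin_glb_lt; lra | apply Rmin_l] | apply Rmin_r]).
  assert (Hq : 0 < q <= th - b /\ q <= PI / 2) by (unfold q; split; [split; [apply Rmin_glb_lt; lra | apply Rmin_l] | apply Rmin_r]).
  pose proof (cth2_bounds th Hth) as Hc. set (c := cos (th / 2)) in *.
  assert (H2 : 2 * (sin p * sin q) <= 1 - cos (p + q)).
  { pose proof (COS_bound (p - q)). rewrite cos_minus in H0. rewrite cos_plus. lra. }
  assert (Hcab : cos (a - b) = cos (b - a)) by (replace (a - b) with (- (b - a)) by ring; apply cos_neg).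
  destruct (Rle_dec (th - p - q) PI) as [hA|hB].
  - assert (H3 : cos (th - p - q) <= cos (b - a)).
    { destruct (Req_dec (b - a) (th - p - q)) as [e|e].
      - rewrite e; lra.
      - left. apply cos_decreasing_1; lra. }
    assert (H4 : 2 * c <= cos (p + q) + cos (th - p - q)).
    { set (w := th / 2 - p - q).
      replace (p + q) with (th / 2 - w) by (unfold w; ring).
      replace (th - p - q) with (th / 2 + w) by (unfold w; field).
      rewrite cos_minus, cos_plus. fold c. pose proof (COS_bound w). nra. }
    lra.
  - assert (H3 : cos (th - PI) <= cos (p + q)).
    { left. apply cos_decreasing_1; lra. }
    rewrite cos_minus, cos_PI, sin_PI in H3.
    assert (Hct : cos th = 2 * c * c - 1).
    { unfold c. replace th with (2 * (th / 2)) at 1 by field. rewrite cos_2a_cos. ring. }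
    pose proof (COS_bound (a - b)). nra.
Qed.

Lemma key_trig th (Hth : PI < th < 2 * PI) a b : 0 < a < th -> 0 < b < th ->
  fval th a * fval th b <= (1 + cos (a - b)) / 2 - cos (th / 2).
Proof.
  intros Ha Hb.
  destruct (fval_bounds th Hth a Ha) as [A0 [A1 A2]].
  destruct (fval_bounds th Hth b Hb) as [B0 [B1 B2]].
  destruct (Rle_dec a b) as [h|h].
  - eapply Rle_trans; [|apply (trig_core th Hth a b); lra].
    apply Rmult_le_compat; auto.
  - replace (cos (a - b)) with (cos (b - a)) by (replace (a - b) with (- (b - a)) by ring; rewrite cos_neg; reflexivity).
    rewrite Rmult_comm.
    eapply Rle_trans; [|apply (trig_core th Hth b a); lra].
    apply Rmult_le_compat; auto.
Qed.

Lemma zero_bd th (Hth : PI < th < 2 * PI) : boundary (sector th) (0, 0).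
Proof.
  intros e He. pose proof PI_RGT_0. pose proof (sin_th_neg th Hth). split.
  - exists (0, e / 2). split.
    + exists (e / 2), (PI / 2). repeat split; try lra.
      rewrite cos_PI2, sin_PI2. f_equal; ring.
    + rewrite Cmod_mp. replace ((0 - 0) ^ 2 + (e / 2 - 0) ^ 2) with ((e/2)^2) by ring.
      rewrite sqrt_pow2; lra.
  - exists (e / 2, 0). split.
    + intro Hs. apply (sector_notW th Hth _ Hs). split; unfold Lf; simpl; nra.
    + rewrite Cmod_mp. replace ((e / 2 - 0) ^ 2 + (0 - 0) ^ 2) with ((e/2)^2) by ring.
      rewrite sqrt_pow2; lra.
Qed.

Lemma Cmod_tri (x y z : C) : Cmod (Cminus x y) <= Cmod (Cminus x z) + Cmod (Cminus z y).
Proof.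
  replace (Cminus x y) with (Cplus (Cminus x z) (Cminus z y)).
  - apply Cmod_triangle.
  - destruct x, y, z. unfold Cminus, Cplus, Copp; simpl. f_equal; ring.
Qed.

Lemma dist_props th (Hth : PI < th < 2 * PI) x : sector th x ->
  0 <= dist_bd (sector th) x /\
  (forall q, inW th q -> dist_bd (sector th) x <= Cmod (Cminus x q)) /\
  (forall m, (forall z, boundary (sector th) z -> m <= Cmod (Cminus x z)) -> m <= dist_bd (sector th) x).
Proof.
  intros Hx. unfold dist_bd.
  destruct (glb_props (fun d => exists z, boundary (sector th) z /\ d = Cmod (Cminus x z))
     (Cmod (Cminus x (0,0))) 0) as [G1 G2].
  - exists (0,0). split; auto. apply zero_bd; auto.
  - intros v [z [_ ->]]. apply Cmod_ge_0.
  - split; [|split].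
    + apply G2. intros v [z [_ ->]]. apply Cmod_ge_0.
    + intros q Hq. destruct (seg_boundary th Hth x q Hx Hq) as [w [Hw Hwq]].
      eapply Rle_trans; [apply G1; exists w; split; eauto | auto].
    + intros m Hm. apply G2. intros v [z [Hz ->]]. auto.
Qed.

Lemma s_props th (Hth : PI < th < 2 * PI) x y :
  let I := real (Glb_Rbar (fun d => exists z, boundary (sector th) z /\
                     d = Cmod (Cminus x z) + Cmod (Cminus z y))) in
  Cmod (Cminus x y) <= I /\ I <= Cmod (Cminus x (0,0)) + Cmod (Cminus (0,0) y) /\
  (forall m, (forall z, boundary (sector th) z -> m <= Cmod (Cminus x z) + Cmod (Cminus z y)) -> m <= I).
Proof.
  intros I.
  destruct (glb_props (fun d => exists z, boundary (sector th) z /\ d = Cmod (Cminus x z) + Cmod (Cminus z y))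
     (Cmod (Cminus x (0,0)) + Cmod (Cminus (0,0) y)) 0) as [G1 G2].
  - exists (0,0). split; auto. apply zero_bd; auto.
  - intros v [z [_ ->]]. pose proof (Cmod_ge_0 (Cminus x z)). pose proof (Cmod_ge_0 (Cminus z y)). lra.
  - split; [|split].
    + apply G2. intros v [z [_ ->]]. apply Cmod_tri.
    + apply G1. exists (0,0). split; auto. apply zero_bd; auto.
    + intros m Hm. apply G2. intros v [z [Hz ->]]. auto.
Qed.

Lemma shift_sector th (Hth : PI < th < 2 * PI) a b e f :
  sector th (a, b) -> inW th (e, f) -> sector th (a - e, b - f).
Proof.
  intros Hx [Hz1 Hz2]. apply notW_sector; auto. intros [H1 H2].
  apply (sector_notW th Hth _ Hx). unfold inW, Lf in *; simpl in *. split; [lra|].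
  replace (b * cos th - a * sin th) with (((b - f) * cos th - (a - e) * sin th) + (f * cos th - e * sin th)) by ring.
  lra.
Qed.

Lemma main_z th (Hth : PI < th < 2 * PI) x y z : sector th x -> sector th y -> inW th z ->
  Cmod (Cminus x y) ^ 2 + 4 * dist_bd (sector th) x * dist_bd (sector th) y <=
  (1 - cos (th / 2)) * (Cmod (Cminus x z) + Cmod (Cminus z y)) ^ 2.
Proof.
  intros Hx Hy Hz.
  destruct (dist_props th Hth x Hx) as [dx0 [dxq _]].
  destruct (dist_props th Hth y Hy) as [dy0 [dyq _]].
  set (dx := dist_bd (sector th) x) in *. set (dy := dist_bd (sector th) y) in *.
  destruct x as [a1 b1], y as [a2 b2], z as [e f].
  destruct (shift_sector th Hth a1 b1 e f Hx Hz) as [u [al [Hu [Hal1 [Hal2 EX]]]]].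
  destruct (shift_sector th Hth a2 b2 e f Hy Hz) as [v [be [Hv [Hbe1 [Hbe2 EY]]]]].
  injection EX as EX1 EX2. injection EY as EY1 EY2.
  destruct (qpt_spec th Hth u al ltac:(lra) Hu) as [QW [QC F0]].
  destruct (qpt_spec th Hth v be ltac:(lra) Hv) as [QW' [QC' G0]].
  destruct (qpt th u al) as [q1 q2]. destruct (qpt th v be) as [r1 r2].
  assert (Hdx : dx <= u * fval th al).
  { rewrite <- QC. 
    assert (inW th (q1 + e, q2 + f)).
    { destruct QW, Hz. unfold inW, Lf in *; simpl in *. split; [lra|].
      replace ((q2 + f) * cos th - (q1 + e) * sin th) with ((q2 * cos th - q1 * sin th) + (f * cos th - e * sin th)) by ring. lra. }
    eapply Rle_trans; [apply dxq; eauto|]. rewrite !Cmod_mp. right. f_equal. 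
    rewrite <- EX1, <- EX2. ring. }
  assert (Hdy : dy <= v * fval th be).
  { rewrite <- QC'. 
    assert (inW th (r1 + e, r2 + f)).
    { destruct QW', Hz. unfold inW, Lf in *; simpl in *. split; [lra|].
      replace ((r2 + f) * cos th - (r1 + e) * sin th) with ((r2 * cos th - r1 * sin th) + (f * cos th - e * sin th)) by ring. lra. }
    eapply Rle_trans; [apply dyq; eauto|]. rewrite !Cmod_mp. right. f_equal. 
    rewrite <- EY1, <- EY2. ring. }
  pose proof (sin2_cos2 al) as Sa. pose proof (sin2_cos2 be) as Sb. unfold Rsqr in Sa, Sb.
  assert (Cu : Cmod (Cminus (a1, b1) (e, f)) = u).
  { rewrite Cmod_mp, EX1, EX2.
    replace ((u * cos al) ^ 2 + (u * sin al) ^ 2) with (u ^ 2 * (sin al * sin al + cos al * cos al)) by ring.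
    rewrite Sa, Rmult_1_r. apply sqrt_pow2; lra. }
  assert (Cv : Cmod (Cminus (e, f) (a2, b2)) = v).
  { rewrite Cmod_mp. replace (e - a2) with (- (a2 - e)) by ring. replace (f - b2) with (- (b2 - f)) by ring.
    rewrite EY1, EY2.
    replace ((- (v * cos be)) ^ 2 + (- (v * sin be)) ^ 2) with (v ^ 2 * (sin be * sin be + cos be * cos be)) by ring.
    rewrite Sb, Rmult_1_r. apply sqrt_pow2; lra. }
  assert (Cxy : Cmod (Cminus (a1, b1) (a2, b2)) ^ 2 = u ^ 2 + v ^ 2 - 2 * u * v * cos (al - be)).
  { rewrite Cmod_mp, pow2_sqrt.
    - replace (a1 - a2) with ((a1 - e) - (a2 - e)) by ring.
      replace (b1 - b2) with ((b1 - f) - (b2 - f)) by ring.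
      rewrite EX1, EX2, EY1, EY2, cos_minus. nra.
    - assert (0 <= (a1 - a2)^2) by apply pow2_ge_0. assert (0 <= (b1 - b2)^2) by apply pow2_ge_0. lra. }
  rewrite Cu, Cv, Cxy.
  pose proof (key_trig th Hth al be ltac:(lra) ltac:(lra)) as K.
  pose proof (cth2_bounds th Hth) as Hc. set (c := cos (th / 2)) in *.
  set (fa := fval th al) in *. set (fb := fval th be) in *. set (cd := cos (al - be)) in *.
  assert (P1 : dx * dy <= (u * fa) * (v * fb)) by (apply Rmult_le_compat; auto).
  assert (P2 : u * v * (fa * fb) <= u * v * ((1 + cd) / 2 - c)).
  { apply Rmult_le_compat_l; auto. nra. }
  assert (P3 : 0 <= (- c) * (u - v) ^ 2).
  { apply Rmult_le_pos; [lra | apply pow2_ge_0]. }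
  nra.
Qed.

Lemma K_sq th : (sqrt 2 * sin (th / 4)) ^ 2 = 1 - cos (th / 2).
Proof.
  replace ((sqrt 2 * sin (th / 4)) ^ 2) with ((sqrt 2 * sqrt 2) * (sin (th / 4) * sin (th / 4))) by ring.
  rewrite sqrt_sqrt by lra. replace (th / 2) with (2 * (th / 4)) by field.
  rewrite cos_2a_sin. ring.
Qed.

Lemma sin4_pos th (Hth : PI < th < 2 * PI) : 0 < sin (th / 4).
Proof. apply sin_gt_0; lra. Qed.

Theorem theorem3p10 (theta : R) (Htheta : PI < theta < 2 * PI) :
  (forall x y : C, sector theta x -> sector theta y ->
     s_metric (sector theta) x y <=
     sqrt 2 * sin (theta / 4) * p_metric (sector theta) x y) /\
  (forall c : R,
     (forall x y : C, sector theta x -> sector theta y ->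
        s_metric (sector theta) x y <= c * p_metric (sector theta) x y) ->
     sqrt 2 * sin (theta / 4) <= c).
Proof.
  pose proof (sin4_pos theta Htheta) as Hsg.
  assert (HK : 0 < sqrt 2 * sin (theta / 4)).
  { apply Rmult_lt_0_compat; auto. apply sqrt_lt_R0; lra. }
  pose proof (K_sq theta) as HK2.
  split.
  - intros x y Hx Hy. unfold s_metric, p_metric.
    destruct (s_props theta Htheta x y) as [I1 [_ I3]].
    set (I := real _) in *.
    destruct (dist_props theta Htheta x Hx) as [dx0 _].
    destruct (dist_props theta Htheta y Hy) as [dy0 _].
    set (dx := dist_bd (sector theta) x) in *. set (dy := dist_bd (sector theta) y) in *.
    set (m := Cmod (Cminus x y)) in *. set (K := sqrt 2 * sin (theta / 4)) in *.
    pose proof (Cmod_ge_0 (Cminus x y)) as Hm0. fold m in Hm0.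
    destruct (Req_dec m 0) as [Em|Em].
    + rewrite Em. unfold Rdiv. rewrite !Rmult_0_l. lra.
    + assert (Hm : 0 < m) by lra.
      set (Q := sqrt (m ^ 2 + 4 * dx * dy)).
      assert (HQ2 : Q * Q = m ^ 2 + 4 * dx * dy) by (apply sqrt_sqrt; nra).
      assert (HQ : 0 < Q) by (apply sqrt_lt_R0; nra).
      assert (HQI : Q <= K * I).
      { assert (Q / K <= I).
        { apply I3. intros z Hz.
          pose proof (main_z theta Htheta x y z Hx Hy (boundary_W theta Htheta z Hz)) as M.
          fold dx dy m in M. rewrite <- HK2 in M. fold K in M.
          set (S := Cmod (Cminus x z) + Cmod (Cminus z y)) in *.
          assert (0 <= S) by (unfold S; pose proof (Cmod_ge_0 (Cminus x z)); pose proof (Cmod_ge_0 (Cminus z y)); lra).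
          assert (Q <= K * S).
          { unfold Q. rewrite <- (sqrt_pow2 (K * S)) by nra. apply sqrt_le_1_alt.
            replace ((K * S) ^ 2) with (K ^ 2 * S ^ 2) by ring. lra. }
          apply Rmult_le_reg_r with K; auto. unfold Rdiv. rewrite Rmult_assoc, Rinv_l by lra. lra. }
        apply Rmult_le_reg_r with (/ K); [apply Rinv_0_lt_compat; lra|].
        replace (K * I * / K) with I by (field; lra). exact H. }
      assert (HI : 0 < I) by lra.
      replace (m / I) with ((m * Q) / (I * Q)) by (field; lra).
      replace (K * (m / Q)) with ((K * m * I) / (I * Q)) by (field; lra).
      unfold Rdiv. apply Rmult_le_compat_r.
      * left. apply Rinv_0_lt_compat. nra.
      * nra.
  - intros c0 Hc0.
    set (sg := sin (theta / 4)) in *.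
    set (x0 := (cos (theta / 4), sin (theta / 4)) : C).
    set (y0 := (cos (3 * theta / 4), sin (3 * theta / 4)) : C).
    assert (Hx0 : sector theta x0).
    { exists 1, (theta / 4). repeat split; try lra. unfold x0. f_equal; ring. }
    assert (Hy0 : sector theta y0).
    { exists 1, (3 * theta / 4). repeat split; try lra. unfold y0. f_equal; ring. }
    specialize (Hc0 x0 y0 Hx0 Hy0). unfold s_metric, p_metric in Hc0.
    destruct (s_props theta Htheta x0 y0) as [I1 [I2 _]].
    set (I := real _) in *.
    destruct (dist_props theta Htheta x0 Hx0) as [dx0 [_ dxl]].
    destruct (dist_props theta Htheta y0 Hy0) as [dy0 [_ dyl]].
    set (dx := dist_bd (sector theta) x0) in *. set (dy := dist_bd (sector theta) y0) in *.
    pose proof (cth2_bounds theta Htheta) as Hc.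
    assert (Hcs : cos (theta / 2) = 1 - 2 * sg * sg).
    { unfold sg. replace (theta / 2) with (2 * (theta / 4)) by field. rewrite cos_2a_sin. ring. }
    assert (Hm2 : Cmod (Cminus x0 y0) ^ 2 = 4 * sg * sg).
    { unfold x0, y0. rewrite Cmod_mp, pow2_sqrt.
      - pose proof (sin2_cos2 (theta / 4)) as S1. pose proof (sin2_cos2 (3 * theta / 4)) as S2.
        unfold Rsqr in S1, S2.
        assert (E : cos (theta / 4) * cos (3 * theta / 4) + sin (theta / 4) * sin (3 * theta / 4) = cos (theta / 2)).
        { rewrite <- cos_minus. replace (theta / 4 - 3 * theta / 4) with (- (theta / 2)) by field.
          apply cos_neg. }
        fold sg in S1, E |- *. nra.
      - assert (0 <= (cos (theta / 4) - cos (3 * theta / 4)) ^ 2) by apply pow2_ge_0.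
        assert (0 <= (sin (theta / 4) - sin (3 * theta / 4)) ^ 2) by apply pow2_ge_0. lra. }
    assert (Hm : Cmod (Cminus x0 y0) = 2 * sg).
    { pose proof (Cmod_ge_0 (Cminus x0 y0)). nra. }
    assert (HI2 : I <= 2).
    { assert (Cmod (Cminus x0 (0, 0)) = 1).
      { unfold x0. rewrite Cmod_mp. pose proof (sin2_cos2 (theta / 4)) as S1. unfold Rsqr in S1.
        replace ((cos (theta / 4) - 0) ^ 2 + (sin (theta / 4) - 0) ^ 2) with 1 by nra. apply sqrt_1. }
      assert (Cmod (Cminus (0, 0) y0) = 1).
      { unfold y0. rewrite Cmod_mp. pose proof (sin2_cos2 (3 * theta / 4)) as S1. unfold Rsqr in S1.
        replace ((0 - cos (3 * theta / 4)) ^ 2 + (0 - sin (3 * theta / 4)) ^ 2) with 1 by nra. apply sqrt_1. }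
      lra. }
    assert (Hdx : sg <= dx).
    { apply dxl. intros z Hz. destruct (boundary_W theta Htheta z Hz) as [Hz1 _].
      pose proof (snd_lip x0 z). pose proof (Rle_abs (snd x0 - snd z)). unfold x0 in *; simpl in *.
      unfold sg in *. lra. }
    assert (Hdy : sg <= dy).
    { apply dyl. intros z Hz. destruct (boundary_W theta Htheta z Hz) as [_ Hz2].
      pose proof (Lf_lip theta y0 z). pose proof (Rle_abs (Lf theta y0 - Lf theta z)).
      assert (Lf theta y0 = - sg).
      { unfold y0, Lf; simpl. rewrite <- sin_minus.
        replace (3 * theta / 4 - theta) with (- (theta / 4)) by field. rewrite sin_neg. reflexivity. }
      rewrite Rabs_minus_sym in H. pose proof (Rle_abs (Lf theta z - Lf theta y0)). 
      lra. }
    rewrite Hm in Hc0, I1.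
    set (Q := sqrt ((2 * sg) ^ 2 + 4 * dx * dy)) in *.
    assert (HQ2 : Q * Q = (2 * sg) ^ 2 + 4 * dx * dy) by (apply sqrt_sqrt; nra).
    assert (HQ : 0 < Q) by (apply sqrt_lt_R0; nra).
    assert (HI : 0 < I) by lra.
    set (sv := 2 * sg / I) in *. set (pv := 2 * sg / Q) in *.
    assert (E1 : sv * I = 2 * sg) by (unfold sv; field; lra).
    assert (E2 : pv * Q = 2 * sg) by (unfold pv; field; lra).
    assert (Hsv : sg <= sv) by nra.
    assert (HQc : Q <= 2 * c0).
    { assert (sg * Q <= c0 * pv * Q) by nra. nra. }
    assert (Hdd : sg * sg <= dx * dy) by nra.
    assert (S2 : sqrt 2 * sqrt 2 = 2) by (apply sqrt_sqrt; lra).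
    assert (S0 : 0 <= sqrt 2) by apply sqrt_pos.
    assert (Hsq : (sqrt 2 * sg) * (sqrt 2 * sg) <= c0 * c0).
    { replace ((sqrt 2 * sg) * (sqrt 2 * sg)) with ((sqrt 2 * sqrt 2) * (sg * sg)) by ring.
      rewrite S2. nra. }
    assert (0 <= sqrt 2 * sg) by nra.
    nra.
Qed.
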